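(* Let $n,m,p$ be positive integers with $m\le n$. Let $b_1,\dots,b_m\in\mathbb{R}^n$ be column vectors with nonnegative integer entries $b_{kj}$ such that $B=[b_1,\dots,b_m]$ has rank $m$ and no zero row, let $A=[a_{ij}]$ be an irreducible $m\times m$ matrix with nonnegative entries, and $f(x)=\sum_{i,j=1}^m a_{ij}\,x_1^{b_{1j}}\cdots x_n^{b_{nj}}\,(b_i-b_j)$. Let $C=[c_{ij}]$ be a $p\times n$ matrix with each entry $0$ or a real number $\ge1$, and $h_i(x)=|x_1|^{c_{i1}}\cdots|x_n|^{c_{in}}$. Let $\mathcal{D}=\mathrm{span}\{b_i-b_j\}$ and assume no boundary equilibria (whenever $x\in\mathbb{R}^n_{\ge0}$ has a zero coordinate and $x-\bar x\in\mathcal{D}$ for some $\bar x\in\mathbb{R}^n_{>0}$, then $f(x)\ne0$). Let $f^*(z,u)=f(z)+C'(u-h(z))$. For $\bar x\in E_+$ let $V(z)=\sum_{i=1}^n\bar x_i\,g(z_i/\bar x_i)$, where $g(r)=r\ln r+1-r$ for $r>0$, $g(0)=1$. Then for each $\bar x\in E_+$ and each constant $u_{\max}\ge0$ there exists a constant $c_{\bar x,u_{\max}}$ such that $\nabla V(z)f^*(z,u)\le c_{\bar x,u_{\max}}$ for all $z\in\mathbb{R}^n_{>0}$ and all $u\in[0,u_{\max}]^p$.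
   Context: $E_+=\{x\in\mathbb{R}^n_{>0}:f(x)=0\}$. $C'$ is the transpose of $C$. *)

(* Defs.v *)
From HB Require Import structures.
From mathcomp Require Import all_boot all_order all_algebra.
From mathcomp Require Import all_classical all_reals all_analysis.
Set Implicit Arguments. Unset Strict Implicit. Unset Printing Implicit Defensive.
Import Order.TTheory GRing.Theory Num.Theory.
Local Open Scope ring_scope.

Section Defs.
Variable R : realType.

Definition natmx_real n m (B : 'M[nat]_(n, m)) : 'M[R]_(n, m) :=
  map_mx (fun k : nat => k%:R) B.

Definition bcol n m (B : 'M[nat]_(n, m)) (j : 'I_m) : 'cV[R]_n := col j (natmx_real B).

(* irreducible matrix: there is no nonempty proper set S of indices with
   A i j = 0 for all i in S, j not in S (equivalently no permutation
   brings A to block-triangular form) *)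
Definition irreducible_mx m (A : 'M[R]_m) : Prop :=
  forall S : {set 'I_m}, S != finset.set0 -> S != [set: 'I_m] ->
    exists i j, [/\ i \in S, j \notin S & A i j != 0].

Definition monom n m (B : 'M[nat]_(n, m)) (j : 'I_m) (x : 'cV[R]_n) : R :=
  \prod_(k < n) (x k 0) ^+ (B k j).

Definition fvec n m (A : 'M[R]_m) (B : 'M[nat]_(n, m)) (x : 'cV[R]_n) : 'cV[R]_n :=
  \sum_(i < m) \sum_(j < m) (A i j * monom B j x) *: (bcol B i - bcol B j).

Definition hvec p n (C : 'M[R]_(p, n)) (x : 'cV[R]_n) : 'cV[R]_p :=
  \col_(i < p) \prod_(k < n) (powR `|x k 0| (C i k)).

Definition fstar n m p (A : 'M[R]_m) (B : 'M[nat]_(n, m)) (C : 'M[R]_(p, n))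
  (z : 'cV[R]_n) (u : 'cV[R]_p) : 'cV[R]_n :=
  fvec A B z + C^T *m (u - hvec C z).

Definition in_D n m (B : 'M[nat]_(n, m)) (v : 'cV[R]_n) : Prop :=
  exists lam : 'I_m -> 'I_m -> R,
    v = \sum_(i < m) \sum_(j < m) lam i j *: (bcol B i - bcol B j).

Definition pos_vec n (x : 'cV[R]_n) : Prop := forall k, 0 < x k 0.
Definition nneg_vec n (x : 'cV[R]_n) : Prop := forall k, 0 <= x k 0.

Definition no_boundary_equilibria n m (A : 'M[R]_m) (B : 'M[nat]_(n, m)) : Prop :=
  forall x : 'cV[R]_n, nneg_vec x -> (exists k, x k 0 = 0) ->
    (exists xb : 'cV[R]_n, pos_vec xb /\ in_D B (x - xb)) ->
    fvec A B x != 0.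

Definition Eplus n m (A : 'M[R]_m) (B : 'M[nat]_(n, m)) (x : 'cV[R]_n) : Prop :=
  pos_vec x /\ fvec A B x = 0.

(* g(r) = r ln r + 1 - r for r > 0, g(0) = 1 (value for r < 0 irrelevant) *)
Definition gfun (r : R) : R := if 0 < r then r * ln r + 1 - r else 1.

Definition Vfun n (xb : 'cV[R]_n) (z : 'cV[R]_n) : R :=
  \sum_(i < n) xb i 0 * gfun (z i 0 / xb i 0).

Definition partial n (k : 'I_n) (F : 'cV[R]_n -> R) (z : 'cV[R]_n) : R :=
  derive1 (fun t : R => F (z + t *: delta_mx k 0)) 0.

Definition grad_dot n (F : 'cV[R]_n -> R) (z w : 'cV[R]_n) : R :=
  \sum_(k < n) partial k F z * w k 0.

End Defs.

(* Main.v *)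
Require Import Defs.
From HB Require Import structures.
From mathcomp Require Import all_boot all_order all_algebra.
From mathcomp Require Import all_classical all_reals all_analysis.
From mathcomp Require Import lra ring.
Import Order.TTheory GRing.Theory Num.Theory.
Local Open Scope ring_scope.

Section S.
Variable R : realType.

Definition phi (b s : R) := s * (ln s - ln b) + b - s.

Lemma is_derive_phi (a b : R) : 0 < a ->
  is_derive a 1 (phi b) (ln a - ln b).
Proof.
move=> a0.
have H := is_derive1_ln a0.
rewrite /phi.
apply: is_derive_eq.
apply: _.
rewrite subr0 addr0 /GRing.scale /= mulr1 mulfV ?gt_eqF //.
by rewrite addrC addKr.
Qed.

Lemma gfun_phi (b s : R) : 0 < b -> 0 < s -> b * gfun (s / b) = phi b s.
Proof.
move=> b0 s0; rewrite /gfun divr_gt0 // /phi ln_div ?posrE //.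
have e : b * (s / b) = s by rewrite mulrCA divff ?gt_eqF // mulr1.
by rewrite mulrBr mulrDr mulr1 mulrA e.
Qed.

Lemma partialV n (xb z : 'cV[R]_n) (k : 'I_n) : pos_vec xb -> pos_vec z ->
  partial k (Vfun xb) z = ln (z k 0) - ln (xb k 0).
Proof.
move=> hxb hz.
set a : R := z k 0; set b : R := xb k 0.
set c0 := \sum_(i < n | i != k) xb i 0 * gfun (z i 0 / xb i 0).
have HD : is_derive (0:R) 1 (fun t => c0 + phi b (t + a)) (ln a - ln b).
  have Hs : is_derive (0:R) 1 (fun t => t + a) 1.
    by apply: is_derive_eq; rewrite addr0.
  have Hp : is_derive ((fun t => t + a) 0) 1 (phi b) (ln a - ln b).
    by rewrite /= add0r; apply: is_derive_phi; exact: hz.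
  have Hc := @is_derive1_comp R (phi b) (fun t => t + a) 0 _ _ Hp Hs.
  by apply: is_derive_eq; rewrite add0r mul1r mulr1.
have Hnear : \forall t \near 0, c0 + phi b (t + a) = Vfun xb (z + t *: delta_mx k 0).
  have := @lt_nbhsr R (- a) 0; rewrite oppr_lt0 => /(_ (hz k)).
  apply: filterS => t ht.
  rewrite /Vfun (bigD1 k) //= addrC; congr (_ + _).
    apply: eq_bigr => i /negbTE ik.
    by rewrite !mxE ik /= mulr0 addr0.
  rewrite !mxE eqxx /= mulr1 gfun_phi //; first by rewrite addrC.
  by rewrite -ltrBlDl sub0r.
rewrite /partial.
have HH := near_eq_is_derive Hnear HD.
rewrite -(@derive_val _ _ _ _ _ _ _ HH).
exact: derive1E.
Qed.

Lemma ln_le_sub1 (x : R) : 0 < x -> ln x <= x - 1.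
Proof.
move=> x0; have h := @le_ln1Dx R (x - 1).
rewrite (_ : 1 + (x - 1) = x) in h; last by lra.
apply: h; lra.
Qed.

Lemma bound_i (H h u U : R) : 0 < H -> 0 < h -> 0 <= u -> u <= U ->
  (u - h) * (ln h - ln H) <= H * expR (U / H).
Proof.
move=> H0 h0 u0 uU.
set M := expR (U / H).
set L := ln h - ln H.
set q := h / H.
set r := H * M / h.
have q0 : 0 < q by rewrite divr_gt0.
have M0 : 0 < M by rewrite expR_gt0.
have r0 : 0 < r by rewrite divr_gt0 ?mulr_gt0.
have ha : L <= q - 1 by rewrite /L -ln_div ?posrE // ln_le_sub1.
have hb : U / H - L <= r - 1.
  have := @ln_le_sub1 r r0.
  rewrite /r ln_div ?posrE ?mulr_gt0 // lnM ?posrE // /M expRK /L.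
  by move=> hh; apply: le_trans hh; lra.
have hq : q * H = h by rewrite /q divfK ?gt_eqF.
have hr : h * r = H * M by rewrite /r mulrC divfK ?gt_eqF.
have hU : h * (U / H) = U * q by rewrite /q mulrCA.
have e1 : u * L <= u * (q - 1) by apply: ler_wpM2l.
have e2 : h * (U / H - L) <= h * (r - 1) by apply: ler_wpM2l => //; apply: ltW.
have e3 : u * q <= U * q by apply: ler_wpM2r => //; apply: ltW.
have HM0 : 0 < H * M by rewrite mulr_gt0.
move: e1 e2 e3; rewrite !mulrBr hU hr mulr1 => e1 e2 e3.
rewrite mulrBl; lra.
Qed.

Lemma ln_prod n (F : 'I_n -> R) : (forall k, 0 < F k) ->
  ln (\prod_(k < n) F k) = \sum_(k < n) ln (F k).
Proof.
elim: n F => [|n IH] F hF; first by rewrite !big_ord0 ln1.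
rewrite !big_ord_recr /= lnM ?posrE ?IH //.
by apply: prodr_gt0 => k _.
Qed.

Lemma fvecE n m (A : 'M[R]_m) (B : 'M[nat]_(n, m)) (x : 'cV[R]_n) k :
  fvec A B x k 0 = \sum_i \sum_j A i j * monom B j x * ((B k i)%:R - (B k j)%:R).
Proof.
rewrite /fvec summxE; apply: eq_bigr => i _; rewrite summxE.
apply: eq_bigr => j _; by rewrite /bcol /natmx_real !mxE.
Qed.

Lemma fstarE n m p (A : 'M[R]_m) (B : 'M[nat]_(n, m)) (C : 'M[R]_(p, n)) z u k :
  fstar A B C z u k 0 = fvec A B z k 0 +
    \sum_i C i k * (u i 0 - \prod_(l < n) powR `|z l 0| (C i l)).
Proof.
rewrite /fstar mxE; congr (_ + _); rewrite mxE; apply: eq_bigr => i _.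
by rewrite !mxE.
Qed.

Lemma complex_balance n m (A : 'M[R]_m) (B : 'M[nat]_(n, m)) (x : 'cV[R]_n) :
  \rank (natmx_real R B) = m -> fvec A B x = 0 ->
  forall i, \sum_j A i j * monom B j x = \sum_j A j i * monom B i x.
Proof.
move=> hr hf.
set v := \row_i (\sum_j A i j * monom B j x - \sum_j A j i * monom B i x).
have hv : v *m (natmx_real R B)^T = 0.
  apply/matrixP => a k; rewrite (ord1 a) [RHS]mxE.
  transitivity (fvec A B x k 0); last by rewrite hf mxE.
  rewrite fvecE mxE.
  under eq_bigr do rewrite !mxE mulrBl !mulr_suml.
  rewrite sumrB.
  under [RHS]eq_bigr => i _ do under eq_bigr => j _ do rewrite mulrBr.
  under [RHS]eq_bigr do rewrite sumrB.
  rewrite sumrB; congr (_ - _).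
  rewrite exchange_big /=; apply: eq_bigr => i _; apply: eq_bigr => j _.
  by rewrite mulrAC.
have hfree : row_free (natmx_real R B)^T by rewrite /row_free mxrank_tr hr.
move=> i; apply/eqP; rewrite -subr_eq0.
have /eqP := hv; rewrite mulmx_free_eq0 // => /eqP /matrixP /(_ 0 i).
by rewrite !mxE => ->.
Qed.


Lemma term1_le0 m (A : 'M[R]_m) (w ly : 'I_m -> R) :
  (forall i j, 0 <= A i j) -> (forall j, 0 <= w j) ->
  (forall i, \sum_j A i j * w j = \sum_j A j i * w i) ->
  \sum_i \sum_j A i j * (w j * expR (ly j)) * (ly i - ly j) <= 0.
Proof.
move=> hA hw hcb.
apply: (@le_trans _ _ (\sum_i \sum_j A i j * w j * (expR (ly i) - expR (ly j)))).
  apply: ler_sum => i _; apply: ler_sum => j _.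
  rewrite mulrA -mulrA; apply: ler_wpM2l; first by rewrite mulr_ge0.
  have -> : expR (ly i) = expR (ly j) * expR (ly i - ly j) by rewrite -expRD addrC subrK.
  rewrite -{3}(mulr1 (expR (ly j))) -mulrBr; apply: ler_wpM2l; first exact: expR_ge0.
  have := expR_ge1Dx (ly i - ly j); lra.
rewrite le_eqVlt; apply/orP; left.
under eq_bigr => i _ do under eq_bigr => j _ do rewrite mulrBr.
under eq_bigr do rewrite sumrB.
rewrite sumrB subr_eq0; apply/eqP.
under eq_bigr => i _ do rewrite -mulr_suml hcb mulr_suml.
by rewrite exchange_big.
Qed.

Lemma monom_fact n m (B : 'M[nat]_(n, m)) (xb z : 'cV[R]_n) j :
  pos_vec xb -> pos_vec z ->
  monom B j z = monom B j xb *
    expR (\sum_k (ln (z k 0) - ln (xb k 0)) * (B k j)%:R).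
Proof.
move=> hxb hz.
rewrite expR_sum /monom -big_split /=; apply: eq_bigr => k _.
rewrite expRM_natr -exprMn expRB !lnK ?posrE //.
by rewrite mulrCA divff ?gt_eqF // mulr1.
Qed.

End S.

Theorem lemma2p10 (R : realType) (n m p : nat)
  (A : 'M[R]_m) (B : 'M[nat]_(n, m)) (C : 'M[R]_(p, n)) :
  (0 < n)%N -> (0 < m)%N -> (0 < p)%N -> (m <= n)%N ->
  \rank (natmx_real R B) = m ->
  (forall k : 'I_n, exists j : 'I_m, B k j <> 0%N) ->
  (forall i j, 0 <= A i j) ->
  irreducible_mx A ->
  (forall i k, C i k = 0 \/ 1 <= C i k) ->
  no_boundary_equilibria A B ->
  forall xb : 'cV[R]_n, Eplus A B xb ->
  forall umax : R, 0 <= umax ->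
  exists c : R, forall (z : 'cV[R]_n) (u : 'cV[R]_p),
    pos_vec z -> (forall i, 0 <= u i 0 <= umax) ->
    grad_dot (Vfun xb) z (fstar A B C z u) <= c.
Proof.
move=> _ _ _ _ hrank _ hA _ _ _ xb [hxb hfxb] umax humax.
pose H (i : 'I_p) : R := \prod_(k < n) powR `|xb k 0| (C i k).
have hH : forall i, 0 < H i.
  by move=> i; apply: prodr_gt0 => k _; apply: powR_gt0; rewrite normr_gt0 gt_eqF // hxb.
exists (\sum_i H i * expR (umax / H i)).
move=> z u hz hu.
rewrite /grad_dot.
under eq_bigr => k _ do rewrite partialV // fstarE mulrDr.
rewrite big_split /= -[X in _ <= X]add0r.
apply: lerD.
- under eq_bigr => k _ do rewrite fvecE.
  have hw : forall j, 0 <= monom B j xb.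
    by move=> j; apply: prodr_ge0 => k _; apply: exprn_ge0; apply: ltW; apply: hxb.
  have T := @term1_le0 R m A (fun j => monom B j xb)
     (fun j => \sum_k (ln (z k 0) - ln (xb k 0)) * (B k j)%:R) hA hw
     (@complex_balance R n m A B xb hrank hfxb).
  apply: le_trans T; rewrite le_eqVlt; apply/orP; left; apply/eqP => /=.
  transitivity (\sum_k \sum_i \sum_j (ln (z k 0) - ln (xb k 0)) *
     (A i j * monom B j z * ((B k i)%:R - (B k j)%:R))).
    by apply: eq_bigr => k _; rewrite mulr_sumr; apply: eq_bigr => i _; rewrite mulr_sumr.
  rewrite exchange_big; apply: eq_bigr => i _; rewrite exchange_big; apply: eq_bigr => j _.
  rewrite -monom_fact // -sumrB mulr_sumr; apply: eq_bigr => k _.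
  ring.
- have hl : forall (x : 'cV[R]_n) i, pos_vec x ->
    ln (\prod_(k < n) powR `|x k 0| (C i k)) = \sum_k C i k * ln (x k 0).
    move=> x i hx; rewrite ln_prod; last by move=> k; apply: powR_gt0; rewrite normr_gt0 gt_eqF // hx.
    by apply: eq_bigr => k _; rewrite ln_powR ger0_norm // ltW // hx.
  apply: (@le_trans _ _ (\sum_i (u i 0 - \prod_(l < n) powR `|z l 0| (C i l)) *
      (ln (\prod_(l < n) powR `|z l 0| (C i l)) - ln (H i)))); last first.
    apply: ler_sum => i _; have /andP[u0 uU] := hu i.
    apply: bound_i => //; apply: prodr_gt0 => k _; apply: powR_gt0.
    by rewrite normr_gt0 gt_eqF // hz.
  rewrite le_eqVlt; apply/orP; left; apply/eqP.
  under [RHS]eq_bigr => i _ do rewrite hl // /H hl // -sumrB mulr_sumr.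
  under eq_bigr => k _ do rewrite mulr_sumr.
  rewrite exchange_big; apply: eq_bigr => i _; apply: eq_bigr => k _.
  ring.
Qed.
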